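(* Over a unary alphabet $\{a\}$, a language is accepted by some poNFA if and only if it is $\mathcal{R}$-trivial.
   Context: A poNFA is an NFA whose reachability relation on states ($p\le q$ iff $q\in p\cdot w$ for some word $w$) is a partial order. $\mathrm{sub}_k(v)$ is the set of subsequences of $v$ of length at most $k$; $u\sim_k v$ iff $\mathrm{sub}_k(u)=\mathrm{sub}_k(v)$; $x\sim^{\mathcal{R}}_k y$ iff each prefix of $x$ is $\sim_k$-equivalent to some prefix of $y$ and vice versa. A regular language is $\mathcal{R}$-trivial if it is a union of $\sim^{\mathcal{R}}_k$-classes for some $k\ge0$. *)

(* Defs.v *)
From mathcomp Require Import all_boot.
Set Implicit Arguments. Unset Strict Implicit. Unset Printing Implicit Defensive.

Record nfa (Sigma : finType) := Nfa {
  nfa_state : finType;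
  nfa_init : {set nfa_state};
  nfa_final : {set nfa_state};
  nfa_trans : nfa_state -> Sigma -> {set nfa_state} }.

Section NFA.
Variables (Sigma : finType) (A : nfa Sigma).

Definition nfa_step (S : {set nfa_state A}) (a : Sigma) : {set nfa_state A} :=
  \bigcup_(p in S) nfa_trans p a.

Definition nfa_run (S : {set nfa_state A}) (w : seq Sigma) : {set nfa_state A} :=
  foldl nfa_step S w.

Definition nfa_accepts (w : seq Sigma) : bool :=
  [exists q in nfa_run (nfa_init A) w, q \in nfa_final A].

Definition nfa_reach (p q : nfa_state A) : Prop :=
  exists w : seq Sigma, q \in nfa_run [set p] w.

Definition is_poNFA : Prop :=
  forall p q, nfa_reach p q -> nfa_reach q p -> p = q.
End NFA.

Definition language (Sigma : finType) := seq Sigma -> Prop.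

Definition accepted_by (Sigma : finType) (A : nfa Sigma) (L : language Sigma) : Prop :=
  forall w, L w <-> nfa_accepts A w.

Definition regular (Sigma : finType) (L : language Sigma) : Prop :=
  exists A : nfa Sigma, accepted_by A L.

Definition sim_k (Sigma : finType) (k : nat) (u v : seq Sigma) : Prop :=
  forall w : seq Sigma, size w <= k -> subseq w u = subseq w v.

Definition simR_k (Sigma : finType) (k : nat) (x y : seq Sigma) : Prop :=
  (forall i, i <= size x -> exists2 j, j <= size y & sim_k k (take i x) (take j y)) /\
  (forall j, j <= size y -> exists2 i, i <= size x & sim_k k (take j y) (take i x)).

Definition union_of_simR_classes (Sigma : finType) (k : nat) (L : language Sigma) : Prop :=
  forall x y, simR_k k x y -> (L x <-> L y).

Definition R_trivial (Sigma : finType) (L : language Sigma) : Prop :=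
  regular L /\ exists k, union_of_simR_classes k L.

(* Main.v *)
Require Import Defs.
From mathcomp Require Import all_boot.
From Stdlib Require Import Classical ClassicalEpsilon.
From mathcomp Require Import zify.
Set Implicit Arguments. Unset Strict Implicit.

Lemma unary_nseq (Sigma : finType) (a : Sigma) (Ha : forall x : Sigma, x = a)
  (w : seq Sigma) : w = nseq (size w) a.
Proof. apply/all_pred1P; apply/allP => x _ /=; by rewrite -(Ha x). Qed.

Lemma unary_subseq (Sigma : finType) (a : Sigma) (Ha : forall x : Sigma, x = a)
  (u v : seq Sigma) : subseq u v = (size u <= size v).
Proof.
rewrite (unary_nseq Ha u) (unary_nseq Ha v) !size_nseq.
case: leqP => h.
  by rewrite -(subnKC h) nseqD prefix_subseq.
apply/negbTE/negP => /size_subseq; rewrite !size_nseq leqNgt h.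
by [].
Qed.

Lemma simR_small (Sigma : finType) (a : Sigma) (Ha : forall x : Sigma, x = a)
  k (x y : seq Sigma) : simR_k k x y -> size x < k -> size y <= size x.
Proof.
move=> [_ H2] hx; rewrite leqNgt; apply/negP => hy.
have [i hi /(_ (nseq (size x).+1 a))] := H2 _ hy.
rewrite size_nseq hx !(unary_subseq Ha) size_nseq !size_take.
move=> /(_ isT).
have -> : (if (size x).+1 < size y then (size x).+1 else size y) = (size x).+1.
  by case: ltnP => // h; apply/eqP; rewrite eqn_leq h hy.
rewrite ltnSn; case: (ltnP i (size x)) => hi'; first by rewrite ltnNge ltnW.
by rewrite ltnn.
Qed.

Lemma simR_large (Sigma : finType) (a : Sigma) (Ha : forall x : Sigma, x = a)
  k (x y : seq Sigma) : k <= size x -> k <= size y -> simR_k k x y.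
Proof.
have gen : forall (x y : seq Sigma), k <= size y -> forall i, i <= size x ->
   exists2 j, j <= size y & sim_k k (take i x) (take j y).
  move=> x' y' hy i hi; exists (minn i k); first by rewrite geq_min hy orbT.
  move=> w hw; rewrite !(unary_subseq Ha) !size_take.
  have -> : (if minn i k < size y' then minn i k else size y') = minn i k.
    by case: ltnP => // h; apply/eqP; rewrite eqn_leq h geq_min hy orbT.
  case: (ltnP i (size x')) => h; rewrite leq_min hw andbT //.
  by have -> : i = size x' by apply/eqP; rewrite eqn_leq hi h.
move=> hx hy; split; [exact: gen | exact: gen].
Qed.

Lemma run_nseq {Sigma : finType} {A : nfa Sigma} (a : Sigma) n (X : {set nfa_state A}) :
  nfa_run X (nseq n a) = iter n (fun Y => nfa_step Y a) X.
Proof.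
by elim: n X => [|n IH] X //=; rewrite /nfa_run /= -/(nfa_run _ _) IH -iterSr.
Qed.

Lemma run_cat {Sigma : finType} {A : nfa Sigma} (X : {set nfa_state A}) u v :
  nfa_run X (u ++ v) = nfa_run (nfa_run X u) v.
Proof. by rewrite /nfa_run foldl_cat. Qed.

Lemma step_mono {Sigma : finType} {A : nfa Sigma} (X Y : {set nfa_state A}) a :
  X \subset Y -> nfa_step X a \subset nfa_step Y a.
Proof.
move=> sXY; apply/subsetP => q /bigcupP [p pX qp]; apply/bigcupP; exists p => //.
exact: (subsetP sXY).
Qed.

Lemma run_mono {Sigma : finType} {A : nfa Sigma} (X Y : {set nfa_state A}) w :
  X \subset Y -> nfa_run X w \subset nfa_run Y w.
Proof.
elim: w X Y => [|b w IH] X Y //= sXY; apply: IH; exact: step_mono.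
Qed.

Lemma reach_trans {Sigma : finType} {A : nfa Sigma} (p r q : nfa_state A) :
  nfa_reach p r -> nfa_reach r q -> nfa_reach p q.
Proof.
move=> [u hu] [v hv]; exists (u ++ v); rewrite run_cat.
apply: (subsetP (run_mono v _)) hv; by rewrite sub1set.
Qed.

Lemma reach_step {Sigma : finType} {A : nfa Sigma} (p q : nfa_state A) b :
  q \in nfa_trans p b -> nfa_reach p q.
Proof.
move=> h; exists [:: b]; rewrite /nfa_run /= /nfa_step big_set1 //.
Qed.

Definition rb {Sigma : finType} {A : nfa Sigma} (p q : nfa_state A) : bool :=
  if excluded_middle_informative (nfa_reach p q) then true else false.

Lemma rbP {Sigma : finType} {A : nfa Sigma} (p q : nfa_state A) : reflect (nfa_reach p q) (rb p q).
Proof. rewrite /rb; case: excluded_middle_informative => h; by constructor. Qed.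

Definition SP {Sigma : finType} {A : nfa Sigma} (q : nfa_state A) : {set nfa_state A} :=
  [set p | (p != q) && rb p q].

Lemma SP_lt {Sigma : finType} {A : nfa Sigma} (po : is_poNFA A) (p q : nfa_state A) :
  p \in SP q -> #|SP p| < #|SP q|.
Proof.
rewrite inE => /andP [npq /rbP rpq]; apply: proper_card; apply/properP; split.
  apply/subsetP => x; rewrite !inE => /andP [nxp /rbP rxp].
  rewrite (introT (rbP _ _) (reach_trans rxp rpq)) andbT.
  apply/eqP => exq; subst x; by rewrite (po _ _ rpq rxp) eqxx in npq.
by exists p; rewrite !inE ?npq ?eqxx //=; apply/rbP.
Qed.

Lemma stable {Sigma : finType} {A : nfa Sigma} (po : is_poNFA A) (a : Sigma) :
  let S := fun n => iter n (fun Y => nfa_step Y a) (nfa_init A) in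
  forall h q, #|SP q| < h -> forall n, #|SP q| < n -> (q \in S n) = (q \in S n.+1).
Proof.
move=> S; elim=> [//|h IH] q hq n hn.
have Sn m : (q \in S m.+1) = [exists p in S m, q \in nfa_trans p a].
  by apply/bigcupP/existsP => [[p pS qp]|[p /andP [pS qp]]]; [exists p; rewrite pS | exists p].
case: n hn => [//|m] hm.
have sp p : q \in nfa_trans p a -> p != q -> #|SP p| < h /\ #|SP p| < #|SP q|.
  move=> qp npq.
  have pin : p \in SP q by rewrite inE npq; apply/rbP; exact: reach_step qp.
  have lt := SP_lt po pin; split => //; exact: leq_trans lt hq.
apply/idP/idP.
  rewrite Sn => /existsP [p /andP [pS qp]].
  case: (eqVneq p q) => [epq|npq].
    subst p; rewrite Sn; apply/existsP; exists q; rewrite qp andbT Sn.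
    by apply/existsP; exists q; rewrite pS.
  have [h1 h2] := sp _ qp npq.
  rewrite Sn; apply/existsP; exists p; rewrite qp andbT -IH //.
  exact: leq_trans h2 hm.
rewrite Sn => /existsP [p /andP [pS qp]].
case: (eqVneq p q) => [epq|npq]; first by subst p.
have [h1 h2] := sp _ qp npq.
rewrite Sn; apply/existsP; exists p; rewrite qp andbT IH //.
exact: leq_trans h2 hm.
Qed.

Lemma acc_size {Sigma : finType} (a : Sigma) (Ha : forall x : Sigma, x = a) (A : nfa Sigma) w :
  nfa_accepts A w = [exists q in iter (size w) (fun Y => nfa_step Y a) (nfa_init A), q \in nfa_final A].
Proof. by rewrite /nfa_accepts {1}(unary_nseq Ha w) run_nseq. Qed.

Lemma dir1 (Sigma : finType) (a : Sigma) (Ha : forall x : Sigma, x = a) (A : nfa Sigma)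
  (po : is_poNFA A) : forall x y : seq Sigma, simR_k #|nfa_state A| x y ->
  nfa_accepts A x = nfa_accepts A y.
Proof.
set k := #|nfa_state A|.
set S := fun n => iter n (fun Y => nfa_step Y a) (nfa_init A).
have cSP (q : nfa_state A) : #|SP q| < k.
  rewrite /k -cardsT; apply: proper_card; rewrite properT; apply/eqP => e.
  by have := in_setT q; rewrite -e inE eqxx.
have S1 n : k <= n -> S n = S n.+1.
  move=> hn; apply/setP => q; apply: (stable po a (h := k)) => //.
  exact: leq_trans (cSP q) hn.
have Sk d : S (k + d) = S k.
  by elim: d => [|d IH]; rewrite ?addn0 // addnS -S1 ?leq_addr.
have Sge n : k <= n -> S n = S k by move=> hn; rewrite -(subnKC hn) Sk.
have sym (x y : seq Sigma) : simR_k k x y -> simR_k k y x by move=> [H1 H2]; split.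
move=> x y hxy; rewrite !(acc_size Ha).
case: (ltnP (size x) k) => hx.
  have hyx := simR_small Ha hxy hx.
  have hxy' := simR_small Ha (sym x y hxy) (leq_ltn_trans hyx hx).
  by have -> : size x = size y by apply/eqP; rewrite eqn_leq hxy' hyx.
case: (ltnP (size y) k) => hy.
  have := simR_small Ha (sym x y hxy) hy => h.
  by move: (leq_trans hx h); rewrite leqNgt hy.
by rewrite -/(S _) -/(S (size y)) Sge // Sge.
Qed.

Definition asb (P : Prop) : bool := if excluded_middle_informative P then true else false.
Lemma asbP P : reflect P (asb P).
Proof. rewrite /asb; case: excluded_middle_informative => h; by constructor. Qed.

Definition chainA {Sigma : finType} (a : Sigma) (k : nat) (L : language Sigma) : nfa Sigma :=
  @Nfa Sigma 'I_k.+1 [set ord0] [set i : 'I_k.+1 | asb (L (nseq i a))]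
    (fun i _ => [set (inord (minn i.+1 k) : 'I_k.+1)]).

Lemma chain_run {Sigma : finType} (a : Sigma) k L n (x : 'I_k.+1) :
  iter n (fun Y => nfa_step Y a) [set x : nfa_state (chainA a k L)] =
  [set (inord (minn (x + n) k) : 'I_k.+1)].
Proof.
elim: n => [|n IH] /=.
  by rewrite addn0 (minn_idPl (leq_ord x : x <= k)) inord_val.
rewrite IH /nfa_step big_set1 /= inordK; last by rewrite ltnS geq_minr.
congr [set inord _]; lia.
Qed.

Lemma chain_po {Sigma : finType} (a : Sigma) (Ha : forall x : Sigma, x = a) k L :
  is_poNFA (chainA a k L).
Proof.
have le (p q : nfa_state (chainA a k L)) : nfa_reach p q -> (p : nat) <= q.
  move=> [w]; rewrite (unary_nseq Ha w) run_nseq chain_run inE => /eqP ->.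
  rewrite inordK; last by rewrite ltnS geq_minr.
  have := leq_ord p; lia.
move=> p q h1 h2; apply: val_inj => /=; apply/eqP; rewrite eqn_leq.
by rewrite (le _ _ h1) (le _ _ h2).
Qed.

Lemma chain_acc {Sigma : finType} (a : Sigma) (Ha : forall x : Sigma, x = a) k L :
  union_of_simR_classes k L -> accepted_by (chainA a k L) L.
Proof.
move=> U w; rewrite (acc_size Ha) /=.
rewrite (@chain_run _ a k L (size w) ord0).
have -> : [exists q in [set (inord (minn (@ord0 k + size w) k) : 'I_k.+1)],
    q \in nfa_final (chainA a k L)] = asb (L (nseq (minn (size w) k) a)).
  apply/existsP/idP => [[q /andP [/set1P -> ]]|h].
    by rewrite inE inordK ?ltnS ?geq_minr.
  exists (inord (minn (size w) k)); rewrite set11 inE inordK ?ltnS ?geq_minr //.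
split => [Lw|/asbP Lm]; first apply/asbP.
  case: (leqP (size w) k) => h; first by rewrite -unary_nseq.
  apply/(U w) => //.
  by apply: (simR_large Ha); rewrite ?size_nseq // ltnW.
move: Lm; case: (leqP (size w) k) => h; first by rewrite -unary_nseq.
move=> Lm; apply: (proj1 (U (nseq k a) w _) Lm).
by apply: (simR_large Ha); rewrite ?size_nseq // ltnW.
Qed.

Theorem mainTheorem10 (Sigma : finType) (unary : #|Sigma| = 1) (L : language Sigma) :
  (exists A : nfa Sigma, is_poNFA A /\ accepted_by A L) <-> R_trivial L.
Proof.
have [a Ha] : exists a : Sigma, forall x : Sigma, x = a.
  have /card1P [a Ha] : #|Sigma| == 1 by rewrite unary.
  by exists a => x; apply/eqP; have := Ha x; rewrite !inE.
split.
  move=> [A [po acc]]; split; first by exists A.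
  exists #|nfa_state A| => x y h; by rewrite !acc (dir1 Ha po h).
move=> [_ [k U]]; exists (chainA a k L); split; [exact: chain_po | exact: chain_acc].
Qed.
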